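(* Let $n\ge1$ and $1\le k\le n$. For every $g\in\mathrm{Sp}(2n,\mathbb R)$ one has $p_k(g^{-1})=(-1)^k p_k(g)$.
   Context: $J:\mathbb R^{2n}\to\mathbb R^{2n}$ is the linear map with $Je_i=(-1)^ie_{2n-i+1}$ on the standard basis $e_1,\dots,e_{2n}$, and $\mathrm{Sp}(2n,\mathbb R)=\{g\in\mathrm{GL}(2n,\mathbb R):g^TJg=J\}$. The antiprincipal $k\times k$ minor $p_k(g)$ of a $2n\times 2n$ matrix $g$ is defined by $ge_{2n}\wedge ge_{2n-1}\wedge\cdots\wedge ge_{2n-k+1}\wedge e_{k+1}\wedge\cdots\wedge e_{2n}=p_k(g)\,e_1\wedge\cdots\wedge e_{2n}$; equivalently $p_k(g)=\det\big(g[\{1,\dots,k\},\{2n,2n-1,\dots,2n-k+1\}]\big)$, the determinant of the submatrix with rows $1,\dots,k$ and columns $2n,\dots,2n-k+1$ in that order. *)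

(* Defs.v *)
From mathcomp Require Import all_boot all_order all_algebra.
From mathcomp Require Import all_classical all_reals.
Set Implicit Arguments. Unset Strict Implicit. Unset Printing Implicit Defensive.
Import GRing.Theory Num.Theory.
Local Open Scope ring_scope.

(* Indices are 0-based: paper index i (1..2n) corresponds to ordinal i-1. *)

(* J with J e_i = (-1)^i e_{2n-i+1} (1-based), i.e. column j (0-based)
   has the entry (-1)^(j+1) in row 2n-1-j (0-based). *)
Definition Jmx (R : ringType) (n : nat) : 'M[R]_(n.*2) :=
  \matrix_(i < n.*2, j < n.*2)
     (if (i : nat) == (n.*2 - 1 - j)%N then (-1) ^+ (j.+1) else 0).

Definition symplectic (R : comUnitRingType) (n : nat) (g : 'M[R]_(n.*2)) : Prop :=
  g \in unitmx /\ g^T *m Jmx R n *m g = Jmx R n.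

(* Antiprincipal k x k minor: det of the submatrix with rows 1..k and
   columns 2n, 2n-1, ..., 2n-k+1 (in that order); 0-based entry (r,c) is
   g r (2n-1-c).  Requires k <= 2n. *)
Definition antiminor (R : comRingType) (m k : nat) (hk : (k <= m)%N)
    (g : 'M[R]_m) : R :=
  \det (\matrix_(r < k, c < k)
          g (widen_ord hk r) (rev_ord (widen_ord hk c))).

(* Main.v *)
Require Import Defs.
From mathcomp Require Import all_boot all_order all_algebra.
From mathcomp Require Import all_classical all_reals.
From mathcomp Require Import zify.
Import GRing.Theory Num.Theory.
Local Open Scope ring_scope.

Section Aux.
Variable R : comUnitRingType.
Variable n : nat.

Lemma sign_rev (x : 'I_(n.*2)) : (-1) ^+ (rev_ord x).+1 = (-1) ^+ x :> R.
Proof.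
rewrite -signr_odd -[RHS]signr_odd; congr (_ ^+ _).
have hx := ltn_ord x.
have -> : (rev_ord x).+1 = (n.*2 - x)%N by rewrite /=; lia.
by rewrite oddB ?odd_double //= ltnW.
Qed.

Lemma mulmxJ p (N : 'M[R]_(p, n.*2)) a b :
  (N *m Jmx R n) a b = (-1) ^+ (b.+1) * N a (rev_ord b).
Proof.
rewrite !mxE (bigD1 (rev_ord b)) //= big1 ?addr0.
  rewrite mxE /=.
  have hb := ltn_ord b.
  have -> : ((n.*2 - b.+1)%N == (n.*2 - 1 - b)%N) by apply/eqP; lia.
  by rewrite mulrC.
move=> i hi; rewrite mxE.
case: eqP => [e|]; last by rewrite mulr0.
exfalso; move/eqP: hi; apply; apply/val_inj => /=.
have := ltn_ord i; have := ltn_ord b; lia.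
Qed.

Lemma mulJmx p (N : 'M[R]_(n.*2, p)) a b :
  (Jmx R n *m N) a b = (-1) ^+ a * N (rev_ord a) b.
Proof.
rewrite !mxE (bigD1 (rev_ord a)) //= big1 ?addr0.
  rewrite mxE /=.
  have ha := ltn_ord a.
  have -> : ((a : nat) == (n.*2 - 1 - (n.*2 - a.+1))%N) by apply/eqP; lia.
  have := sign_rev a; rewrite /= => ->. done.
move=> i hi; rewrite mxE.
case: eqP => [e|]; last by rewrite mul0r.
exfalso; move/eqP: hi; apply; apply/val_inj => /=.
have := ltn_ord i; have := ltn_ord a; lia.
Qed.

Lemma JJ : Jmx R n *m Jmx R n = - 1%:M.
Proof.
apply/matrixP => a b; rewrite mulJmx !mxE /=.
have ha := ltn_ord a; have hb := ltn_ord b.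
case: (eqVneq a b) => [<-|ne].
  case: eqP => e; last by exfalso; apply: e; lia.
  by rewrite exprS mulrCA -expr2 sqrr_sign mulr1.
rewrite ?(negbTE ne) ?mulr0n.
case: eqP => e; last by rewrite mulr0 oppr0.
exfalso; move/eqP: ne; apply; apply/val_inj => /=; lia.
Qed.

Lemma inv_symp (g : 'M[R]_(n.*2)) : symplectic g ->
  invmx g = - (Jmx R n *m g^T *m Jmx R n).
Proof.
move=> [gu hg].
have hl : - (Jmx R n *m g^T *m Jmx R n) *m g = 1%:M.
  by rewrite mulNmx -!mulmxA (mulmxA g^T) hg JJ opprK.
by rewrite -[LHS]mul1mx -hl -(mulmxA _ g) mulmxV // mulmx1.
Qed.

End Aux.

Theorem mainTheorem9 (R : realType) (n k : nat) (hn : (1 <= n)%N)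
    (hk1 : (1 <= k)%N) (hkn : (k <= n)%N) (hk : (k <= n.*2)%N)
    (g : 'M[R]_(n.*2)) :
  symplectic g ->
  antiminor hk (invmx g) = (-1) ^+ k * antiminor hk g.
Proof.
move=> hs; rewrite /antiminor (@inv_symp R n g hs).
set A := \matrix_(r < k, c < k) g (widen_ord hk r) (rev_ord (widen_ord hk c)).
set D := diag_mx (\row_(i < k) ((-1) ^+ i : R)).
have -> : \matrix_(r < k, c < k)
    (- (Jmx R n *m g^T *m Jmx R n)) (widen_ord hk r) (rev_ord (widen_ord hk c))
    = (-1) *: (D *m A^T *m D).
  apply/matrixP => r c.
  rewrite mul_mx_diag mxE mul_diag_mx mxE -mulmxA mulJmx mulmxJ rev_ordK sign_rev !mxE.

  by rewrite /= mulN1r mulrA [in RHS]mulrAC.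
rewrite detZ !det_mulmx det_tr det_diag.
congr (_ * _); rewrite mulrAC -big_split /=.
rewrite big1 ?mul1r // => i _; rewrite mxE -expr2 sqrr_sign //.
Qed.
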